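(* Let $R:\mathbb R^d\to(0,\infty)$ satisfy $|R(x)-R(y)|\le|x-y|$ for all $x,y$, and let $\rho(x,y)=\inf_\gamma\int_\gamma \frac{|dz|}{R(z)}$, the infimum over all piecewise $C^1$ curves $\gamma$ in $\mathbb R^d$ joining $x$ and $y$. Then for all $x,y\in\mathbb R^d$, \[ |x-y|\le 2^{3\rho(x,y)}R(x). \] *)

(* Defs.v *)
From Stdlib Require Import Reals.
From Coquelicot Require Import Coquelicot.
From mathcomp Require Import ssreflect ssrfun ssrbool eqtype ssrnat fintype bigop.

Local Open Scope R_scope.

Definition vec (d : nat) := 'I_d -> R.

Definition enorm {d : nat} (x : vec d) : R :=
  sqrt (\big[Rplus/0]_(i < d) (x i ^ 2)).

Definition vsub {d : nat} (x y : vec d) : vec d := fun i => x i - y i.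

Definition C1 {d : nat} (g : R -> vec d) : Prop :=
  forall i : 'I_d,
    (forall t, ex_derive (fun s => g s i) t) /\
    (forall t, continuous (Derive (fun s => g s i)) t).

Definition speed {d : nat} (g : R -> vec d) (t : R) : R :=
  sqrt (\big[Rplus/0]_(i < d) (Derive (fun s => g s i) t ^ 2)).

(* [pw_cost Rf x y c] : c = \int_gamma |dz| / Rf(z) for some piecewise C^1
   curve gamma joining x to y.  The curve is parametrised on [t 0, t n],
   with t 0 < t 1 < ... < t n, and on [t k, t (k+1)] it coincides with
   the C^1 function g k; consecutive pieces match at the break points. *)
Definition pw_cost {d : nat} (Rf : vec d -> R) (x y : vec d) (c : R) : Prop :=
  exists (n : nat) (t : nat -> R) (g : nat -> R -> vec d),
    (0 < n)%nat /\
    (forall k, (k < n)%nat -> t k < t (S k)) /\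
    (forall k, (k < n)%nat -> C1 (g k)) /\
    (forall i, g 0%nat (t 0%nat) i = x i) /\
    (forall i, g (n - 1)%nat (t n) i = y i) /\
    (forall k i, (S k < n)%nat -> g k (t (S k)) i = g (S k) (t (S k)) i) /\
    c = \big[Rplus/0]_(k < n)
          RInt (fun s => speed (g k) s / Rf (g k s)) (t k) (t (S k)).

Definition rho {d : nat} (Rf : vec d -> R) (x y : vec d) : R :=
  real (Glb_Rbar (pw_cost Rf x y)).

(* Main.v *)
From HB Require Import structures.
Require Import Defs.
From Stdlib Require Import Reals Lra FunctionalExtensionality.
From Coquelicot Require Import Coquelicot.
From mathcomp Require Import ssreflect ssrfun ssrbool eqtype ssrnat fintype bigop.

Local Open Scope R_scope.


Lemma RplusA : associative Rplus. Proof. move=> a b c; ring. Qed.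
Lemma RplusC : commutative Rplus. Proof. move=> a b; ring. Qed.
Lemma Rplus0 : left_id 0 Rplus. Proof. move=> a; ring. Qed.
HB.instance Definition _ := Monoid.isComLaw.Build R 0 Rplus RplusA RplusC Rplus0.


Lemma bsum_ge0 (I : Type) (r : list I) (F : I -> R) : (forall i, 0 <= F i) -> 0 <= \big[Rplus/0]_(i <- r) F i.
Proof. move=> H; elim: r => [|a r IH]; [rewrite big_nil; lra | rewrite big_cons; have := H a; lra]. Qed.

Lemma bsum_split (I : Type) (r : list I) (F G : I -> R) :
  \big[Rplus/0]_(i <- r) (F i + G i) = \big[Rplus/0]_(i <- r) F i + \big[Rplus/0]_(i <- r) G i.
Proof. elim: r => [|a r IH]; [rewrite !big_nil; ring | rewrite !big_cons IH; ring]. Qed.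

Lemma bsum_quad (I : Type) (r : list I) (a b : I -> R) (l : R) :
  \big[Rplus/0]_(i <- r) ((l * a i - b i)^2) =
  l^2 * \big[Rplus/0]_(i <- r) (a i ^ 2) - 2 * l * \big[Rplus/0]_(i <- r) (a i * b i)
   + \big[Rplus/0]_(i <- r) (b i ^ 2).
Proof. elim: r => [|x r IH]; [rewrite !big_nil; ring | rewrite !big_cons IH; ring]. Qed.

Lemma CS (I : Type) (r : list I) (a b : I -> R) :
  \big[Rplus/0]_(i <- r) (a i * b i) <=
  sqrt (\big[Rplus/0]_(i <- r) (a i ^ 2)) * sqrt (\big[Rplus/0]_(i <- r) (b i ^ 2)).
Proof.
set A := \big[Rplus/0]_(i <- r) (a i ^ 2).
set S := \big[Rplus/0]_(i <- r) (a i * b i).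
set B := \big[Rplus/0]_(i <- r) (b i ^ 2).
have H : forall l, 0 <= l^2 * A - 2 * l * S + B.
  move=> l; rewrite /A /S /B -bsum_quad; apply: bsum_ge0 => i; apply: pow2_ge_0.
have HA : 0 <= A by apply: bsum_ge0 => i; apply: pow2_ge_0.
have HB : 0 <= B by apply: bsum_ge0 => i; apply: pow2_ge_0.
have Hp : 0 <= sqrt A * sqrt B by apply: Rmult_le_pos; apply: sqrt_pos.
case: (Rle_lt_dec S 0) => HS; first lra.
case: (Rle_lt_or_eq_dec _ _ HA) => HA'.
- have := H (S / A). move=> H1.
  have H2 : S ^ 2 <= A * B.
    have e : (S / A) ^ 2 * A - 2 * (S / A) * S + B = B - S^2 / A by field; lra.
    rewrite e in H1. have H3 := H1.
    have : 0 <= A * (B - S^2/A) by apply: Rmult_le_pos; lra.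
    have -> : A * (B - S^2/A) = A * B - S^2 by field; lra. lra.
  rewrite -sqrt_mult //. rewrite -(sqrt_pow2 S); last lra.
  by apply: sqrt_le_1_alt.
- have := H ((B + 1) / (2 * S)). rewrite -HA'.
  have -> : ((B + 1) / (2 * S)) ^ 2 * 0 - 2 * ((B + 1) / (2 * S)) * S + B = -1 by field; lra.
  lra.
Qed.

Lemma bsum_cont (I : Type) (r : list I) (F : I -> R -> R) t :
  (forall i, continuity_pt (F i) t) ->
  continuity_pt (fun s => \big[Rplus/0]_(i <- r) F i s) t.
Proof.
move=> H; elim: r => [|a r IH].
  have -> : (fun s => \big[Rplus/0]_(i <- nil) F i s) = fun _ => 0.
    by apply: functional_extensionality => s; rewrite big_nil.
  apply: continuity_pt_const => ? ?; done.
have -> : (fun s => \big[Rplus/0]_(i <- cons a r) F i s) = (F a + fun s => \big[Rplus/0]_(i <- r) F i s)%F.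
  by apply: functional_extensionality => s; rewrite big_cons.
exact: continuity_pt_plus.
Qed.

Lemma bsum_derive (I : Type) (r : list I) (F : I -> R -> R) (dF : I -> R) t :
  (forall i, is_derive (F i) t (dF i)) ->
  is_derive (fun s => \big[Rplus/0]_(i <- r) F i s) t (\big[Rplus/0]_(i <- r) dF i).
Proof.
move=> H; elim: r => [|a r IH].
  have -> : (fun s => \big[Rplus/0]_(i <- nil) F i s) = fun _ => 0.
    by apply: functional_extensionality => s; rewrite big_nil.
  rewrite big_nil; exact: (is_derive_const (0:R) t).
have -> : (fun s => \big[Rplus/0]_(i <- cons a r) F i s) = (fun s => plus (F a s) (\big[Rplus/0]_(i <- r) F i s)).
  by apply: functional_extensionality => s; rewrite big_cons.
rewrite big_cons. exact: (is_derive_plus _ _ _ _ _ (H a) IH).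
Qed.


Lemma cont_of_cont (f : R -> R) t : continuous f t -> continuity_pt f t.
Proof. move=> H; exact: (proj2 (continuity_pt_filterlim f t) H). Qed.

Lemma cont_of_derive (f : R -> R) t l : is_derive f t l -> continuity_pt f t.
Proof. move=> H; apply: cont_of_cont; apply: ex_derive_continuous; by exists l. Qed.

Lemma is_derive_eq (f : R -> R) x l l' : is_derive f x l -> l = l' -> is_derive f x l'.
Proof. by move=> H <-. Qed.

Lemma mono (f df : R -> R) a b : a <= b ->
  (forall x, a <= x <= b -> is_derive f x (df x)) ->
  (forall x, a <= x <= b -> 0 <= df x) -> f a <= f b.
Proof.
move=> Hab Hd Hp. case: (Rle_lt_or_eq_dec _ _ Hab) => Hab'; last by subst; lra.
have [c [Hc E]] : exists c, a <= c <= b /\ f b - f a = df c * (b - a).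
  have := MVT_gen f a b df. rewrite /= Rmin_left ?Rmax_right; try lra. apply.
  - move=> x Hx; apply: Hd; lra.
  - move=> x Hx; apply: (cont_of_derive _ _ (df x)); apply: Hd; lra.
have := Hp c Hc. have : 0 <= b - a by lra. move=> H1 H2.
have := Rmult_le_pos _ _ H2 H1. lra.
Qed.

Lemma speed_cont d (g : R -> vec d) : Defs.C1 g -> forall t, continuity_pt (speed g) t.
Proof.
move=> Hg t. rewrite /speed.
apply: (continuity_pt_comp (fun s => \big[Rplus/0]_(i<d) (Derive (fun s0 => g s0 i) s ^ 2)) sqrt).
- apply: bsum_cont => i.
  have Hc : continuity_pt (Derive (fun s0 => g s0 i)) t := cont_of_cont _ _ ((Hg i).2 t).
  have -> : (fun s => Derive (fun s0 => g s0 i) s ^ 2) = (Derive (fun s0 => g s0 i) * Derive (fun s0 => g s0 i))%F.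
    by apply: functional_extensionality => s; rewrite /mult_fct; ring.
  exact: continuity_pt_mult.
- apply: continuity_pt_sqrt; apply: bsum_ge0 => i; apply: pow2_ge_0.
Qed.

Lemma Rg_cont d (Rf : vec d -> R)
  (Rlip : forall x y, Rabs (Rf x - Rf y) <= enorm (vsub x y)) (g : R -> vec d) :
  Defs.C1 g -> forall t, continuity_pt (fun s => Rf (g s)) t.
Proof.
move=> Hg t. set e := fun s => enorm (vsub (g s) (g t)).
have He : continuity_pt e t.
  rewrite /e /enorm /vsub.
  apply: (continuity_pt_comp (fun s => \big[Rplus/0]_(i<d) ((g s i - g t i) ^ 2)) sqrt).
  - apply: bsum_cont => i.
    have Hc : continuity_pt (fun s => g s i) t.
      apply: cont_of_cont; apply: ex_derive_continuous; exact: ((Hg i).1 t).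
    have -> : (fun s => (g s i - g t i) ^ 2) = mult_fct (fun s => g s i - g t i) (fun s => g s i - g t i).
      by apply: functional_extensionality => s; rewrite /mult_fct; ring.
    have Hc2 : continuity_pt (fun s => g s i - g t i) t.
      apply: (continuity_pt_minus (fun s => g s i) (fun _ => g t i)) => //.
      exact: continuity_pt_const.
    exact: continuity_pt_mult.
  - apply: continuity_pt_sqrt; apply: bsum_ge0 => i; apply: pow2_ge_0.
have He0 : e t = 0.
  rewrite /e /enorm /vsub big1 ?sqrt_0 // => i _; ring.
move=> eps Heps. case: (He eps Heps) => alp [Halp H]. exists alp; split => // x Hx.
have := H x Hx. rewrite /= /R_dist He0 Rminus_0_r.
have := Rlip (g x) (g t). have : 0 <= e x by apply: sqrt_pos.
move=> H0 H1. rewrite Rabs_right; last lra. rewrite /e in H0 *. lra.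
Qed.


Lemma ell_derive d (g : R -> vec d) : Defs.C1 g -> forall a s,
  is_derive (fun u => RInt (speed g) a u) s (speed g s).
Proof.
move=> Hg a s. apply: is_derive_RInt.
- apply: filter_forall => b0; apply: RInt_correct; apply: ex_RInt_continuous => z _.
  apply/continuity_pt_filterlim; exact: speed_cont.
- apply/continuity_pt_filterlim; exact: speed_cont.
Qed.

Lemma ell_ge0 d (g : R -> vec d) : Defs.C1 g -> forall a s, a <= s -> 0 <= RInt (speed g) a s.
Proof.
move=> Hg a s Has.
have := mono (fun u => RInt (speed g) a u) (speed g) a s Has.
rewrite RInt_point. apply => x _; [exact: ell_derive | exact: sqrt_pos].
Qed.

Lemma proj_le d (g : R -> vec d) : Defs.C1 g -> forall a s (v : vec d), a <= s ->
  \big[Rplus/0]_(i < d) (v i * (g s i - g a i)) <= enorm v * RInt (speed g) a s.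
Proof.
move=> Hg a s v Has.
have := mono (fun u => enorm v * RInt (speed g) a u - \big[Rplus/0]_(i < d) (v i * (g u i - g a i)))
  (fun u => enorm v * speed g u - \big[Rplus/0]_(i < d) (v i * Derive (fun s0 => g s0 i) u)) a s Has.
rewrite RInt_point big1; last by move=> i _; ring.
have -> : enorm v * zero - 0 = 0 by rewrite /zero /=; ring.
move=> H. suff : 0 <= enorm v * RInt (speed g) a s -
     \big[Rplus/0]_(i < d) (v i * (g s i - g a i)) by lra.
apply: H => x _.
- apply: (is_derive_minus (fun u => enorm v * RInt (speed g) a u)).
  + apply: is_derive_scal; exact: ell_derive.
  + apply: bsum_derive => i. apply: is_derive_scal.
    apply: (is_derive_eq _ _ (minus (Derive (fun s0 => g s0 i) x) zero)).
    * apply: is_derive_minus; [apply: Derive_correct; exact: ((Hg i).1 x) | exact: is_derive_const].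
    * rewrite /minus /plus /opp /zero /=; ring.
- suff : \big[Rplus/0]_(i < d) (v i * Derive (fun s0 => g s0 i) x) <= enorm v * speed g x by lra.
  exact: (CS _ (index_enum 'I_d) v (fun i => Derive (fun s0 => g s0 i) x)).
Qed.

Lemma dist_le d (g : R -> vec d) : Defs.C1 g -> forall a s, a <= s ->
  enorm (vsub (g s) (g a)) <= RInt (speed g) a s.
Proof.
move=> Hg a s Has. have := proj_le d g Hg a s (vsub (g s) (g a)) Has.
have Hl := ell_ge0 d g Hg a s Has.
have E : \big[Rplus/0]_(i < d) (vsub (g s) (g a) i * (g s i - g a i)) =
         enorm (vsub (g s) (g a)) * enorm (vsub (g s) (g a)).
  rewrite /enorm sqrt_sqrt; last by apply: bsum_ge0 => i; apply: pow2_ge_0.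
  apply: eq_bigr => i _; rewrite /vsub; ring.
rewrite E. have Hn : 0 <= enorm (vsub (g s) (g a)) by apply: sqrt_pos.
case: (Rle_lt_or_eq_dec _ _ Hn) => Hn'; last by rewrite -Hn'; lra.
move=> H. apply: (Rmult_le_reg_l _ _ _ Hn'). lra.
Qed.

Lemma Rf_le d (Rf : vec d -> R)
  (Rlip : forall x y, Rabs (Rf x - Rf y) <= enorm (vsub x y)) (g : R -> vec d) :
  Defs.C1 g -> forall a s, a <= s -> Rf (g s) <= Rf (g a) + RInt (speed g) a s.
Proof.
move=> Hg a s Has. have := dist_le d g Hg a s Has. have := Rlip (g s) (g a).
have := Rle_abs (Rf (g s) - Rf (g a)). lra.
Qed.

Lemma piece d (Rf : vec d -> R) (Rpos : forall x, 0 < Rf x)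
  (Rlip : forall x y, Rabs (Rf x - Rf y) <= enorm (vsub x y)) (g : R -> vec d) :
  Defs.C1 g -> forall a b C, a <= b -> 0 < C -> Rf (g a) <= C ->
  ln (C + RInt (speed g) a b) - ln C <= RInt (fun s => speed g s / Rf (g s)) a b.
Proof.
move=> Hg a b C Hab HC HRa.
have Hint : forall u, continuity_pt (fun s => speed g s / Rf (g s)) u.
  move=> u. apply: (continuity_pt_div (speed g) (fun s => Rf (g s))).
  exact: speed_cont. exact: Rg_cont. have := Rpos (g u); lra.
have := mono (fun u => RInt (fun s => speed g s / Rf (g s)) a u - ln (C + RInt (speed g) a u))
  (fun u => speed g u / Rf (g u) - speed g u / (C + RInt (speed g) a u)) a b Hab.
rewrite !RInt_point /zero /= Rplus_0_r.
move=> H. suff : 0 - ln C <= RInt (fun s => speed g s / Rf (g s)) a b - ln (C + RInt (speed g) a b) by lra.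
apply: H => x [Hx1 Hx2].
- have Hl := ell_ge0 d g Hg a x Hx1.
  apply: (is_derive_eq _ _ (minus (speed g x / Rf (g x)) (speed g x / (C + RInt (speed g) a x)))); last by rewrite /minus /plus /opp /=; ring.
  apply: (is_derive_minus (fun u => RInt (fun s => speed g s / Rf (g s)) a u)).
  + apply: (is_derive_RInt (fun s => speed g s / Rf (g s)) _ a x).
    * apply: filter_forall => b0; apply: RInt_correct; apply: ex_RInt_continuous => z _.
      apply/continuity_pt_filterlim; exact: Hint.
    * apply/continuity_pt_filterlim; exact: Hint.
  + apply: (is_derive_eq _ _ (scal (speed g x) (/ (C + RInt (speed g) a x)))).
    * apply: (is_derive_comp ln (fun u => C + RInt (speed g) a u)).
      - apply/is_derive_Reals; apply: derivable_pt_lim_ln; lra.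
      - apply: (is_derive_eq _ _ (plus zero (speed g x))).
        apply: (is_derive_plus (fun _ => C)); [exact: is_derive_const | exact: ell_derive].
        rewrite /plus /zero /=; ring.
    * rewrite /scal /= /mult /=; field; lra.
- have Hl := ell_ge0 d g Hg a x Hx1.
  have H1 := Rf_le d Rf Rlip g Hg a x Hx1.
  have Hp := Rpos (g x). have Hs : 0 <= speed g x by apply: sqrt_pos.
  rewrite /Rdiv. have : / (C + RInt (speed g) a x) <= / Rf (g x).
    apply: Rinv_le_contravar; lra.
  move=> Hi. have := Rmult_le_compat_l _ _ _ Hs Hi. lra.
Qed.


Fixpoint psum (f : nat -> R) (m : nat) : R :=
  match m with O => 0 | S m => psum f m + f m end.

Lemma big_psum n (f : nat -> R) : \big[Rplus/0]_(k < n) f k = psum f n.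
Proof. elim: n => [|n IH]; first by rewrite big_ord0. by rewrite big_ord_recr /= IH. Qed.

Lemma enorm_sym d (x y : vec d) : enorm (vsub x y) = enorm (vsub y x).
Proof. rewrite /enorm; congr sqrt; apply: eq_bigr => i _; rewrite /vsub; ring. Qed.

Lemma exp_mono a b : a <= b -> exp a <= exp b.
Proof. move=> H; case: (Rle_lt_or_eq_dec _ _ H) => H'; [left; exact: exp_increasing | by subst; lra]. Qed.

Lemma cost_lb d (Rf : vec d -> R) (Rpos : forall x, 0 < Rf x)
  (Rlip : forall x y, Rabs (Rf x - Rf y) <= enorm (vsub x y)) (x y : vec d) c :
  pw_cost Rf x y c -> ln (Rf x + enorm (vsub y x)) - ln (Rf x) <= c.
Proof.
move=> [n [t [g [Hn [Ht [Hg [H0 [Hend [Hmatch Hc]]]]]]]]].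
set v := vsub y x.
pose ell k := RInt (speed (g k)) (t k) (t (S k)).
pose cost k := RInt (fun s => speed (g k) s / Rf (g k s)) (t k) (t (S k)).
pose z m := match m with O => x | S m' => g m' (t m) end.
have Hstart : forall m, (m < n)%nat -> g m (t m) = z m.
  case=> [|m] Hm; apply: functional_extensionality => i; first exact: H0.
  symmetry; exact: Hmatch.
have Hx := Rpos x.
have Inv : forall m, (m <= n)%nat ->
  Rf (z m) <= Rf x + psum ell m /\
  \big[Rplus/0]_(i < d) (v i * (z m i - x i)) <= enorm v * psum ell m /\
  ln (Rf x + psum ell m) - ln (Rf x) <= psum cost m /\ 0 <= psum ell m.
  elim=> [|m IH] Hm.
  - rewrite /= big1; last by move=> i _; ring.
    rewrite Rplus_0_r Rmult_0_r. lra.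
  - have Hm' : (m < n)%nat := Hm. have [IH1 [IH2 [IH3 IH4]]] := IH (ltnW Hm).
    have Ha := Ht m Hm'. have HS := Hstart m Hm'.
    have Hgm := Hg m Hm'.
    have Hab : t m <= t (S m) by lra.
    have Hl : 0 <= ell m := ell_ge0 _ _ Hgm (t m) (t (S m)) Hab.
    have Hz : z (S m) = g m (t (S m)) by [].
    change (z m.+1) with (g m (t m.+1)). change (psum ell m.+1) with (psum ell m + ell m). change (psum cost m.+1) with (psum cost m + cost m).
    split.
      have := Rf_le d Rf Rlip (g m) Hgm (t m) (t (S m)) Hab. rewrite HS. fold (ell m). lra.
    split.
      have := proj_le d (g m) Hgm (t m) (t (S m)) v Hab. fold (ell m).
      have E : \big[Rplus/0]_(i < d) (v i * (g m (t (S m)) i - x i)) =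
        \big[Rplus/0]_(i < d) (v i * (g m (t (S m)) i - g m (t m) i)) +
        \big[Rplus/0]_(i < d) (v i * (z m i - x i)).
        rewrite -bsum_split. apply: eq_bigr => i _. rewrite HS; ring.
      rewrite E Rmult_plus_distr_l. lra.
    split; last lra.
    have HRa : Rf (g m (t m)) <= Rf x + psum ell m by rewrite HS.
    have := piece d Rf Rpos Rlip (g m) Hgm (t m) (t (S m)) (Rf x + psum ell m) Hab ltac:(lra) HRa.
    fold (ell m) (cost m). rewrite Rplus_assoc. lra.
have [I1 [I2 [I3 I4]]] := Inv n (leqnn n).
have Hzn : z n = y.
  move: Hend; case: n Hn {Inv I1 I2 I3 I4 Ht Hg Hmatch Hc Hstart} => [//|n'] _ Hend.
  apply: functional_extensionality => i. rewrite -Hend /= subn1 //.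
rewrite Hzn in I2.
have E : \big[Rplus/0]_(i < d) (v i * (y i - x i)) = enorm v * enorm v.
  rewrite /enorm sqrt_sqrt; last by apply: bsum_ge0 => i; apply: pow2_ge_0.
  apply: eq_bigr => i _; rewrite /v /vsub; ring.
rewrite E in I2.
have Hv : enorm v <= psum ell n.
  have Hn0 : 0 <= enorm v by apply: sqrt_pos.
  case: (Rle_lt_or_eq_dec _ _ Hn0) => Hn'; last by rewrite -Hn'; lra.
  apply: (Rmult_le_reg_l _ _ _ Hn'). lra.
rewrite Hc (big_psum n cost).
have := ln_le (Rf x + enorm v) (Rf x + psum ell n) ltac:(have := sqrt_pos (\big[Rplus/0]_(i < d) (v i ^ 2)); rewrite /enorm; lra) ltac:(lra).
lra.
Qed.


Lemma line_cost d (Rf : vec d -> R) (x y : vec d) : exists c, pw_cost Rf x y c.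
Proof.
eexists. exists 1%nat, INR, (fun _ s i => x i + s * (y i - x i)).
split; first done. split.
  move=> k _; rewrite S_INR; lra.
split.
  move=> k _ i; split.
  - move=> s; auto_derive; done.
  - move=> s.
    have -> : Derive (fun s0 => x i + s0 * (y i - x i)) = fun _ => y i - x i.
      apply: functional_extensionality => u; apply: is_derive_unique; auto_derive; done || ring.
    exact: continuous_const.
split. move=> i /=; ring.
split. move=> i /=; ring.
split. by move=> k i.
reflexivity.
Qed.

Theorem lemma1p5 (d : nat) (Rf : vec d -> R)
  (Rpos : forall x, 0 < Rf x)
  (Rlip : forall x y, Rabs (Rf x - Rf y) <= enorm (vsub x y)) :
  forall x y : vec d,
    enorm (vsub x y) <= Rpower 2 (3 * rho Rf x y) * Rf x.
Proof.
move=> x y.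
set B := ln (Rf x + enorm (vsub y x)) - ln (Rf x).
have Hx := Rpos x.
have Hw : 0 <= enorm (vsub y x) by apply: sqrt_pos.
have HB0 : 0 <= B.
  have := ln_le (Rf x) (Rf x + enorm (vsub y x)) Hx ltac:(lra). rewrite /B; lra.
have Hrho : B <= rho Rf x y.
  have [lb glb] := Glb_Rbar_correct (pw_cost Rf x y).
  have H1 := glb (Rbar.Finite B) (fun c Hc => cost_lb d Rf Rpos Rlip x y c Hc).
  have [c0 Hc0] := line_cost d Rf x y.
  have H2 := lb c0 Hc0.
  rewrite /rho. move: H1 H2. case: (Glb_Rbar (pw_cost Rf x y)) => [r| |] /= H1 H2 //.
set r := rho Rf x y in Hrho *.
have HeB : exp B = (Rf x + enorm (vsub y x)) / Rf x.
  rewrite /B -ln_div; [|lra|lra]. rewrite exp_ln //. apply: Rdiv_lt_0_compat; lra.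
have Hl2 := ln_lt_2.
have He : exp B <= Rpower 2 (3 * r).
  rewrite /Rpower. apply: exp_mono. nra.
rewrite enorm_sym.
have : exp B * Rf x <= Rpower 2 (3 * r) * Rf x by apply: Rmult_le_compat_r; lra.
rewrite HeB. have -> : (Rf x + enorm (vsub y x)) / Rf x * Rf x = Rf x + enorm (vsub y x) by field; lra.
lra.
Qed.
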